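(* Let $E,m\ge1$ and consider the IEEE-754 floating-point format $\mathbb{F}^E_m=(1+E+m,\gamma,\phi)$ described in the context. For any distinct $b,b'\in\{0,1\}^{1+E+m}$ such that the set $\{\gamma(b),\gamma(b')\}$ is neither $\{0\}$ nor $\{\bot\}$, the following are equivalent: (i) $\phi^{-1}(b)<_{\mathrm{dict}}\phi^{-1}(b')$; (ii) $b<_{\mathbb{F}^E_m}b'$; (iii) $\gamma(b)<\gamma(b')$ in the order of the extended reals.
   Context: Extended reals: $\overline{\mathbb{R}}=\mathbb{R}\cup\{-\infty,+\infty,\bot\}$ with strict linear order $-\infty<x<x'<+\infty<\bot$ for reals $x<x'$ ($\bot$ is a special NaN value, the largest element). $<_{\mathrm{dict}}$ is the lexicographic order on bit strings of equal length. Floating-point value map $\gamma$ on strings $s\,e_E\ldots e_1\,f_1\ldots f_m$ with bias $b_E=2^{E-1}-1$ and $e=(e_E\ldots e_1)_2$: if $e=0$, $\gamma=(-1)^s(0.f_1\ldots f_m)_2\,2^{1-b_E}$; if $0<e<2^E-1$, $\gamma=(-1)^s(1.f_1\ldots f_m)_2\,2^{e-b_E}$; if $e=2^E-1$ and $f_1\ldots f_m=0^m$, $\gamma=(-1)^s\infty$; if $e=2^E-1$ and $f_1\ldots f_m\ne0^m$, $\gamma=\bot$. For $k\ge1$, the sign-magnitude map on $(k+1)$-bit strings is $\psi_k(0b_1\ldots b_k)=1\bar b_1\ldots\bar b_k$, $\psi_k(1b_1\ldots b_k)=0b_1\ldots b_k$ ($\bar b$ the complement bit). The bijection $\phi:\{0,1\}^{1+E+m}\to\{0,1\}^{1+E+m}$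 is: if $b\le_{\mathrm{dict}}1\,1^E0^m$, $\phi(b)=\psi_{E+m}(c)$ where $c$ is the $(1+E+m)$-bit binary representation of the integer $(b)_2+(2^m-1)$; otherwise $\phi(b)=b$. The order $<_{\mathbb{F}^E_m}$ on $\{0,1\}^{1+E+m}$ is defined by $b<_{\mathbb{F}^E_m}b'$ iff $\phi^{-1}(b)<_{\mathrm{dict}}\phi^{-1}(b')$. *)

(* Defs.v *)
From HB Require Import structures.
From mathcomp Require Import all_boot all_order all_algebra.
From mathcomp Require Import reals.
Set Implicit Arguments. Unset Strict Implicit. Unset Printing Implicit Defensive.
Import Order.TTheory GRing.Theory Num.Theory.
Local Open Scope ring_scope.

(* Extended reals  R ∪ {-oo, +oo, ⊥}  with  -oo < x < x' < +oo < ⊥. *)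
Inductive xreal (R : realType) : Type :=
| XNInf : xreal R
| XReal : R -> xreal R
| XPInf : xreal R
| XNaN  : xreal R.
Arguments XNInf {R}. Arguments XPInf {R}. Arguments XNaN {R}.

Definition xrank (R : realType) (x : xreal R) : nat :=
  match x with XNInf => 0 | XReal _ => 1 | XPInf => 2 | XNaN => 3 end.

Definition xlt (R : realType) (x y : xreal R) : Prop :=
  match x, y with
  | XReal a, XReal b => a < b
  | _, _ => (xrank x < xrank y)%N
  end.

Fixpoint dict_lt (s t : seq bool) : bool :=
  match s, t with
  | x :: s', y :: t' => (~~ x && y) || ((x == y) && dict_lt s' t')
  | _, _ => false
  end.
Definition dict_le (s t : seq bool) : bool := dict_lt s t || (s == t).

Definition bin_val (s : seq bool) : nat := foldl (fun acc (x : bool) => (acc.*2 + x)%N) 0%N s.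

Definition bin_repr (k n : nat) : k.-tuple bool :=
  [tuple odd (n %/ 2 ^ (k.-1 - i)) | i < k].

(* sign-magnitude map psi_k on (k+1)-bit strings:
   psi(0 b1..bk) = 1 ~b1..~bk,  psi(1 b1..bk) = 0 b1..bk. *)
Definition psi (n : nat) (c : n.-tuple bool) : n.-tuple bool :=
  let c0 := nth false c 0 in
  [tuple (if (i : nat) == 0%N then ~~ c0
          else if c0 then nth false c i else ~~ nth false c i) | i < n].

Definition fp_top (E m : nat) : (1 + E + m).-tuple bool :=
  [tuple ((i : nat) <= E)%N | i < 1 + E + m].

Definition fp_phi (E m : nat) (b : (1 + E + m).-tuple bool) : (1 + E + m).-tuple bool :=
  if dict_le b (fp_top E m)
  then psi (bin_repr (1 + E + m) (bin_val b + (2 ^ m - 1)))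
  else b.

(* phi^{-1} (phi is a bijection of the finite type of bit strings) *)
Definition fp_phi_inv (E m : nat) (b : (1 + E + m).-tuple bool) : (1 + E + m).-tuple bool :=
  odflt b [pick c | fp_phi c == b].

Definition fp_lt (E m : nat) (b b' : (1 + E + m).-tuple bool) : Prop :=
  dict_lt (fp_phi_inv b) (fp_phi_inv b').

Definition fp_gamma (R : realType) (E m : nat) (b : (1 + E + m).-tuple bool) : xreal R :=
  let s := nth false b 0 in
  let ebits := take E (drop 1 b) in
  let fbits := drop (1 + E) b in
  let e := bin_val ebits in
  let bias : int := (2 ^ (E - 1))%:Z - 1 in
  let frac : R := \sum_(i < m) (nth false fbits i)%:R / 2 ^+ i.+1 in
  let sgn : R := (-1) ^+ s in
  if e == 0%N then XReal (sgn * frac * 2 ^ (1 - bias))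
  else if (e < 2 ^ E - 1)%N then XReal (sgn * (1 + frac) * 2 ^ (e%:Z - bias))
  else if all (fun x => ~~ x) fbits then (if s then XNInf else XPInf)
  else XNaN.

(* Main.v *)
Require Import Defs.
From HB Require Import structures.
From mathcomp Require Import all_boot all_order all_algebra.
From mathcomp Require Import reals.
Local Open Scope ring_scope.
From mathcomp Require Import zify ring lra.
Import Order.TTheory GRing.Theory Num.Theory.
Local Close Scope ring_scope.

Lemma val_mk n (G : nat -> bool) : val [tuple G (val i) | i < n] = map G (iota 0 n).
Proof. by rewrite /= -val_enum_ord -map_comp. Qed.

Lemma foldl_bv a t : foldl (fun acc (x : bool) => (acc.*2 + x)%N) a t = (a * 2 ^ size t + bin_val t)%N.
Proof.
elim: t a => [|x t IH] a /=; first by rewrite /bin_val /= expn0 muln1 addn0.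
rewrite /bin_val /= IH (IH x) expnS; lia.
Qed.

Lemma bin_val_cons x t : bin_val (x :: t) = (x * 2 ^ size t + bin_val t)%N.
Proof. by rewrite {1}/bin_val /= foldl_bv. Qed.

Lemma bin_val_cat s t : bin_val (s ++ t) = (bin_val s * 2 ^ size t + bin_val t)%N.
Proof. by rewrite {1}/bin_val foldl_cat foldl_bv. Qed.

Lemma bin_val_lt s : (bin_val s < 2 ^ size s)%N.
Proof.
elim: s => [|x s IH] //=; rewrite bin_val_cons expnS; case: x => /=; lia.
Qed.

Lemma dict_lt_bv s t : size s = size t -> dict_lt s t = (bin_val s < bin_val t)%N.
Proof.
elim: s t => [|x s IH] [|y t] //= [Hs]; rewrite !bin_val_cons IH // Hs.
have := bin_val_lt s; have := bin_val_lt t; rewrite Hs.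
case: x; case: y => /=; lia.
Qed.

Lemma bin_val_inj s t : size s = size t -> bin_val s = bin_val t -> s = t.
Proof.
elim: s t => [|x s IH] [|y t] //= [Hs]; rewrite !bin_val_cons Hs => H.
have := bin_val_lt s; have := bin_val_lt t; rewrite Hs => h1 h2.
have Hxy : x = y by case: x y H {IH} => [] [] /=; lia.
subst y; congr (_ :: _); apply: IH => //; lia.
Qed.

Lemma bin_val_negb s : (bin_val (map negb s) + bin_val s = 2 ^ size s - 1)%N.
Proof.
elim: s => [|x s IH] //=; rewrite !bin_val_cons size_map expnS.
have := bin_val_lt s; case: x => /=; lia.
Qed.

Lemma bin_val_all0 s : all negb s = (bin_val s == 0%N).
Proof.
elim: s => [|x s IH] //=; rewrite bin_val_cons IH.
have : (0 < 2 ^ size s)%N by rewrite expn_gt0.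
case: x => /=; lia.
Qed.

Lemma bin_val_nseq x k : bin_val (nseq k x) = (x * (2 ^ k - 1))%N.
Proof.
elim: k => [|k IH] /=; first by rewrite muln0.
rewrite bin_val_cons size_nseq IH expnS.
have : (0 < 2 ^ k)%N by rewrite expn_gt0.
clear IH; case: x => /=; lia.
Qed.

Lemma mod_step n k : ((n %/ 2) %% 2 ^ k * 2 + odd n = n %% 2 ^ k.+1)%N.
Proof.
have e1 := divn_eq n 2; have e2 := divn_eq (n %/ 2) (2 ^ k).
rewrite modn2 in e1.
set q := n %/ 2 in e1 e2 *; set r := q %% 2 ^ k in e2 *; set a := q %/ 2 ^ k in e2.
have h : (r < 2 ^ k)%N by rewrite /r ltn_pmod // expn_gt0.
have -> : n = (a * 2 ^ k.+1 + (r * 2 + odd n))%N by rewrite expnSr; lia.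
rewrite modnMDl modn_small //; rewrite expnSr; case: (odd n) => /=; lia.
Qed.

Lemma bin_repr_seq k n : val (bin_repr k n) = map (fun i => odd (n %/ 2^(k.-1 - i))) (iota 0 k).
Proof. exact: val_mk. Qed.

Lemma bin_repr_val' k n : bin_val (map (fun i => odd (n %/ 2^(k.-1 - i))) (iota 0 k)) = (n %% 2 ^ k)%N.
Proof.
elim: k n => [|k IH] n; first by rewrite /= modn1.
rewrite (_ : iota 0 k.+1 = iota 0 k ++ [:: k]); last by rewrite -addn1 iotaD.
rewrite map_cat bin_val_cat /= bin_val_cons /= subnn ?expn0 ?divn1 ?muln1 expn1.
rewrite (_ : bin_val [::] = 0%N) // addn0.
have -> : [seq odd (n %/ 2 ^ (k - i)) | i <- iota 0 k] = [seq odd ((n %/ 2) %/ 2 ^ (k.-1 - i)) | i <- iota 0 k].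
  apply/eq_in_map => i; rewrite mem_iota add0n => Hi.
  rewrite -divnMA -expnS; congr (odd (_ %/ 2 ^ _)); lia.
rewrite IH -mod_step; lia.
Qed.

Lemma bin_repr_val k n : bin_val (bin_repr k n) = (n %% 2 ^ k)%N.
Proof. by rewrite bin_repr_seq bin_repr_val'. Qed.

Lemma bin_val_psi n (c : n.-tuple bool) : (0 < n)%N ->
  bin_val (psi c) = (if 2 ^ n.-1 <= bin_val c then bin_val c - 2 ^ n.-1 else 2 ^ n - 1 - bin_val c)%N.
Proof.
case: c => s Hs0 Hn; have Hs := eqP Hs0.
rewrite /psi (val_mk n (fun i => if i == 0%N then ~~ nth false s 0
          else if nth false s 0 then nth false s i else ~~ nth false s i)) /=.
case: s Hs0 Hs => [|x r] Hs0 Hs; first by subst n.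
subst n => /=; clear Hs0 Hn.
rewrite (iotaDl 1 0) -map_comp /=.
have -> : [seq (if x then nth false r i else ~~ nth false r i) | i <- iota 0 (size r)]
   = if x then r else map negb r.
  case: x; first by rewrite -/(mkseq _ _) mkseq_nth.
  by rewrite (map_comp negb (nth false r)) -/(mkseq _ _) mkseq_nth.
rewrite !bin_val_cons; have := bin_val_lt r; have := bin_val_negb r.
rewrite expnS; case: x => /=; rewrite ?size_map => h1 h2; case: ifP => h3; lia.
Qed.

Lemma map_const_nseq (T U : Type) (b : U) (s : seq T) : map (fun _ => b) s = nseq (size s) b.
Proof. by elim: s => //= _ s ->. Qed.

Lemma bin_val_top E m : bin_val (fp_top E m) = (2 ^ (1 + E + m) - 2 ^ m)%N.
Proof.
rewrite /fp_top (val_mk (1 + E + m) (fun i => (i <= E)%N)) iotaD map_cat bin_val_cat.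
have -> : [seq (i <= E)%N | i <- iota 0 (1 + E)] = map (fun _ => true) (iota 0 (1 + E)).
  apply/eq_in_map => i; rewrite mem_iota; lia.
have -> : [seq (i <= E)%N | i <- iota (0 + (1 + E)) m] = map (fun _ => false) (iota (0 + (1 + E)) m).
  apply/eq_in_map => i; rewrite mem_iota; lia.
rewrite !map_const_nseq !size_iota.
rewrite !bin_val_nseq size_nseq mul0n addn0 mul1n expnD mulnBl mul1n !expnD //.
Qed.

Set Implicit Arguments. Unset Strict Implicit.
Lemma tuple_bv_inj n (s t : n.-tuple bool) : bin_val s = bin_val t -> s = t.
Proof. move=> h; apply: val_inj; apply: bin_val_inj => //; by rewrite !size_tuple. Qed.

Lemma dict_lt_tuple n (s t : n.-tuple bool) : dict_lt s t = (bin_val s < bin_val t)%N.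
Proof. by apply: dict_lt_bv; rewrite !size_tuple. Qed.

Lemma dict_le_tuple n (s t : n.-tuple bool) : dict_le s t = (bin_val s <= bin_val t)%N.
Proof.
have e : (val s == val t) = (bin_val s == bin_val t).
  apply/eqP/eqP => [->//|h]; by rewrite (tuple_bv_inj h).
by rewrite /dict_le dict_lt_tuple e orbC -leq_eqVlt.
Qed.

Definition Vf (E m n : nat) : nat :=
  let P := 2 ^ (E + m) in let M := 2 ^ m in
  if n <= 2 * P - M then (if P <= n + (M - 1) then n + (M - 1) - P else 2 * P - 1 - (n + (M - 1))) else n.

Lemma bin_val_phi E m (c : (1 + E + m).-tuple bool) : bin_val (fp_phi c) = Vf E m (bin_val c).
Proof.
have eN : (1 + E + m = (E + m).+1)%N by rewrite -addnA add1n.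
have hM : (1 <= 2 ^ m)%N by rewrite expn_gt0.
have hMP : (2 ^ m <= 2 ^ (E + m))%N by rewrite leq_exp2l // leq_addl.
have e2 : (2 ^ (1 + E + m) = 2 * 2 ^ (E + m))%N by rewrite eN expnS.
have e3 : ((1 + E + m).-1 = E + m)%N by rewrite eN.
have hc : (bin_val c < 2 ^ (1 + E + m))%N by have := bin_val_lt c; rewrite size_tuple.
rewrite e2 in hc.
rewrite /fp_phi dict_le_tuple bin_val_top e2 /Vf.
case: ifP => h1; last by [].
rewrite bin_val_psi; last by rewrite eN.
rewrite bin_repr_val e3 e2 modn_small; last by lia.
done.
Qed.

Lemma phi_inj E m : injective (@fp_phi E m).
Proof.
have eN : (1 + E + m = (E + m).+1)%N by rewrite -addnA add1n.
have e2 : (2 ^ (1 + E + m) = 2 * 2 ^ (E + m))%N by rewrite eN expnS.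
have hM : (1 <= 2 ^ m)%N by rewrite expn_gt0.
have hMP : (2 ^ m <= 2 ^ (E + m))%N by rewrite leq_exp2l // leq_addl.
move=> c c' h; apply: tuple_bv_inj.
have hc : (bin_val c < 2 ^ (1 + E + m))%N by have := bin_val_lt c; rewrite size_tuple.
have hc' : (bin_val c' < 2 ^ (1 + E + m))%N by have := bin_val_lt c'; rewrite size_tuple.
rewrite e2 in hc hc'.
have := congr1 (fun t : (1 + E + m).-tuple bool => bin_val t) h; rewrite /= !bin_val_phi /Vf.
by repeat (match goal with |- context[if ?b then _ else _] => case: ifP => ? end); lia.
Qed.

Lemma phi_inv_phi E m (c : (1 + E + m).-tuple bool) : fp_phi_inv (fp_phi c) = c.
Proof.
rewrite /fp_phi_inv; case: pickP => [c' /eqP h|h] /=; first exact: phi_inj h.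
by have := h c; rewrite eqxx.
Qed.

Lemma phi_surj E m (b : (1 + E + m).-tuple bool) : exists c, b = fp_phi c.
Proof.
case: (injF_bij (@phi_inj E m)) => g _ gK; exists (g b); by rewrite gK.
Qed.

Definition gmag (M u : nat) : nat := if (u < M)%N then u else ((M + u %% M) * 2 ^ (u %/ M).-1)%N.

Lemma gmag_ef M e f : (f < M)%N -> gmag M (e * M + f) = if e == 0%N then f else ((M + f) * 2 ^ e.-1)%N.
Proof.
move=> hf; have hM : (0 < M)%N by lia.
rewrite /gmag; case: eqP => [->|he]; first by rewrite mul0n add0n hf.
have -> : (e * M + f < M)%N = false by nia.
by rewrite modnMDl modn_small // divnMDl // divn_small // addn0.
Qed.

Lemma gmag_step M u : (0 < M)%N -> (gmag M u < gmag M u.+1)%N.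
Proof.
move=> hM; rewrite {1}(divn_eq u M).
have hf := ltn_pmod u hM.
set e := u %/ M; set f := u %% M.
have hu : u.+1 = (e * M + f).+1 by rewrite /e /f -divn_eq.
rewrite hu gmag_ef //.
case: (ltnP f.+1 M) => hf1.
  rewrite -addnS gmag_ef //; case: eqP => _; first by [].
  by rewrite ltn_pmul2r ?expn_gt0 // addnS.
have ef : f.+1 = M by lia.
rewrite -addnS ef -[e * M + M]addn0 -mulSnr gmag_ef //=.
case: eqP => [->|he] /=; first by rewrite addn0 expn0 muln1; lia.
have -> : (2 ^ e = 2 * 2 ^ e.-1)%N by rewrite -expnS prednK //; lia.
rewrite addn0; nia.
Qed.

Lemma gmag_mono M u u' : (0 < M)%N -> (u < u')%N -> (gmag M u < gmag M u')%N.
Proof.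
move=> hM; elim: u' => // u' IH; rewrite ltnS leq_eqVlt => /orP [/eqP->|h].
  exact: gmag_step.
exact: ltn_trans (IH h) (gmag_step _ hM).
Qed.

Lemma gmag0 M : (0 < M)%N -> gmag M 0 = 0%N.
Proof. by rewrite /gmag => ->. Qed.

Local Open Scope ring_scope.

Definition Gam (R : realType) (M Q : nat) (c : R) (s : bool) (u : nat) : xreal R :=
  if (u < Q)%N then XReal ((-1) ^+ s * (gmag M u)%:R * c)
  else if u == Q then (if s then XNInf else XPInf) else XNaN.

Definition Gv (R : realType) (M P Q : nat) (c : R) (v : nat) : xreal R :=
  if (P <= v)%N then Gam M Q c true (v - P) else Gam M Q c false v.

Definition Gn (R : realType) (M Q : nat) (c : R) (n : nat) : xreal R :=
  if n == 0%N then XNInf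
  else if (n <= Q)%N then XReal (- (gmag M (Q - n))%:R * c)
  else if (n <= Q + Q)%N then XReal ((gmag M (n - Q - 1))%:R * c)
  else if n == (Q + Q).+1 then XPInf else XNaN.

Definition VfA (M P n : nat) : nat :=
  if (n <= 2 * P - M)%N then (if (P <= n + (M - 1))%N then (n + (M - 1) - P)%N
    else (2 * P - 1 - (n + (M - 1)))%N) else n.

Lemma Gv_VfA (R : realType) M P Q (c : R) n : (1 <= M)%N -> (2 * M <= P)%N -> Q = (P - M)%N ->
  (n < 2 * P)%N -> Gv M P Q c (VfA M P n) = Gn M Q c n.
Proof.
move=> hM hP -> hn; rewrite /VfA.
have [h1|h1] := boolP (n <= 2 * P - M)%N; rewrite ?h1 ?(negbTE h1).
  have [h2|h2] := boolP (P <= n + (M - 1))%N; rewrite ?h2 ?(negbTE h2).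
all: rewrite /Gv /Gam /Gn.
all: repeat (match goal with |- context[if ?b then _ else _] => case: ifP => ? end); try lia.
all: rewrite ?expr1 ?expr0 ?mulN1r ?mul1r; try done.
all: match goal with |- context[gmag _ ?a] => match goal with |- context[gmag _ ?b] =>
   tryif constr_eq a b then fail else (have -> : a = b by lia) end end; done.
Qed.

Lemma neg_lt_pos (R : realType) (a b c : R) : 0 <= a -> 0 <= b -> 0 < a + b -> 0 < c -> - a * c < b * c.
Proof. move=> ha hb hab hc; rewrite ltr_pM2r // ; lra. Qed.

Lemma Gn_mono (R : realType) M Q (c : R) n n' : (0 < M)%N -> (1 <= Q)%N -> 0 < c -> (n < n')%N ->
  ~ (Gn M Q c n = XReal 0 /\ Gn M Q c n' = XReal 0) ->
  ~ (Gn M Q c n = XNaN /\ Gn M Q c n' = XNaN) ->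
  xlt (Gn M Q c n) (Gn M Q c n').
Proof.
move=> hM hQ hc hnn'; rewrite /Gn.
repeat (match goal with |- context[if ?b then _ else _] => case: ifP => ? end); try lia.
all: move=> h0 hN; rewrite /=; try done.
all: try by case: hN.
- rewrite ltr_pM2r // ltrN2 ltr_nat; apply: gmag_mono; lia.
- rewrite ltr_pM2r //.
  have [h1|h1] := ltnP n Q.
    have := gmag_mono hM (_ : (0 < Q - n)%N); rewrite gmag0 // => /(_ ltac:(lia)) hg.
    have : (0 : R) < (gmag M (Q - n))%:R by rewrite ltr0n.
    have : (0 : R) <= (gmag M (n' - Q - 1))%:R by rewrite ler0n.
    lra.
  have [h2|h2] := ltnP (Q.+1) n'.
    have := gmag_mono hM (_ : (0 < n' - Q - 1)%N); rewrite gmag0 // => /(_ ltac:(lia)) hg.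
    have : (0 : R) < (gmag M (n' - Q - 1))%:R by rewrite ltr0n.
    have : (0 : R) <= (gmag M (Q - n))%:R by rewrite ler0n.
    lra.
  exfalso; apply: h0.
  have -> : (Q - n = 0)%N by lia.
  have -> : (n' - Q - 1 = 0)%N by lia.
  by rewrite gmag0 //; split; congr XReal; rewrite ?mulr0n ?oppr0 mul0r.
- rewrite ltr_pM2r // ltr_nat; apply: gmag_mono; lia.
Qed.

Lemma frac_sum (R : realType) (fb : seq bool) :
  \sum_(i < size fb) (nth false fb i)%:R / 2 ^+ i.+1 = (bin_val fb)%:R / 2 ^+ size fb :> R.
Proof.
elim: fb => [|x fb IH]; first by rewrite big_ord0 /= mul0r.
rewrite /= big_ord_recl /=.
have -> : \sum_(i < size fb) (nth false fb (0 + i))%:R / (2 : R) ^+ (bump 0 i).+1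
   = (\sum_(i < size fb) (nth false fb i)%:R / 2 ^+ i.+1) / 2.
  rewrite mulr_suml; apply: eq_bigr => i _ /=.
  rewrite add0n /bump leq0n add1n exprS; field; by rewrite expf_neq0 // pnatr_eq0.
rewrite IH bin_val_cons natrD natrM natrX expr1 [in RHS]exprS.
field; by rewrite expf_neq0 // pnatr_eq0.
Qed.

Definition cst (R : realType) (E m : nat) : R :=
  (2 : R) ^ (1 - ((2 ^ (E - 1))%:Z - 1)) / 2 ^+ m.

Lemma gamma_Gv (R : realType) E m (b : (1 + E + m).-tuple bool) : (1 <= E)%N ->
  fp_gamma R b = Gv (2 ^ m) (2 ^ (E + m)) ((2 ^ E - 1) * 2 ^ m) (cst R E m) (bin_val b).
Proof.
move=> hE; rewrite /fp_gamma.
case: b => s Hs0; have Hs := eqP Hs0; rewrite /=; clear Hs0.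
case: s Hs => [|x r] Hs; first by move: Hs; rewrite /=; lia.
rewrite /= drop0 add0n.
have Hr : size r = (E + m)%N by move: Hs => /= ; lia.
have Heb : size (take E r) = E by rewrite size_take Hr; case: ltnP => h; lia.
have Hfb : size (drop E r) = m by rewrite size_drop Hr; lia.
have Hsum := frac_sum R (drop E r); rewrite Hfb in Hsum; rewrite Hsum.
rewrite bin_val_cons Hr -[in bin_val r](cat_take_drop E r) bin_val_cat Hfb.
rewrite bin_val_all0.
move: (bin_val_lt (take E r)) (bin_val_lt (drop E r)); rewrite Heb Hfb.
set e := bin_val (take E r); set f := bin_val (drop E r) => he hf.
clearbody e f; clear Hs Hsum Heb Hfb Hr.
have hM : (0 < 2 ^ m)%N by rewrite expn_gt0.
have h2E : (2 <= 2 ^ E)%N by rewrite -{1}(expn1 2) leq_exp2l.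
have hu : (e * 2 ^ m + f < 2 ^ (E + m))%N by rewrite expnD; nia.
have -> : Gv (2 ^ m) (2 ^ (E + m)) ((2 ^ E - 1) * 2 ^ m) (cst R E m) (x * 2 ^ (E + m) + (e * 2 ^ m + f))
   = Gam (2 ^ m) ((2 ^ E - 1) * 2 ^ m) (cst R E m) x (e * 2 ^ m + f).
  rewrite /Gv; case: x => /=; rewrite ?mul1n ?mul0n ?add0n.
    by rewrite leq_addr addKn.
  by rewrite leqNgt hu.
rewrite /Gam /cst.
case: eqP => [e0|en0].
  rewrite e0 mul0n add0n.
  have -> : (f < (2 ^ E - 1) * 2 ^ m)%N by nia.
  rewrite /gmag hf; congr XReal; ring.
case: ifP => hlt.
  have -> : (e * 2 ^ m + f < (2 ^ E - 1) * 2 ^ m)%N by nia.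
  rewrite gmag_ef //; move/eqP/negbTE: (en0) => ->; congr XReal.
  have [e' ee] : exists e', e = e'.+1 by exists e.-1; lia.
  rewrite ee /=.
  have -> : (e'.+1%:Z - ((2 ^ (E - 1))%:Z - 1) = (1 - ((2 ^ (E - 1))%:Z - 1)) + e'%:Z)%R.
    rewrite -[e'.+1]add1n PoszD; ring.
  rewrite expfzDr ?pnatr_eq0 // -exprnP natrM natrD !natrX.
  field; by rewrite expf_neq0 // pnatr_eq0.
have ee : e = (2 ^ E - 1)%N by lia.
have -> : (e * 2 ^ m + f < (2 ^ E - 1) * 2 ^ m)%N = false by nia.
have -> : ((e * 2 ^ m + f)%N == ((2 ^ E - 1) * 2 ^ m)%N) = (f == 0%N) by rewrite ee; apply/eqP/eqP; lia.
done.
Qed.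

Lemma xlt_asym (R : realType) (x y : xreal R) : xlt x y -> xlt y x -> False.
Proof.
case: x => [|a||]; case: y => [|b||] //= h1 h2.
by have := lt_trans h1 h2; rewrite ltxx.
Qed.

Lemma cst_gt0 (R : realType) E m : 0 < cst R E m.
Proof. by rewrite /cst divr_gt0 // ?exprz_gt0 // exprn_gt0. Qed.

Theorem proposition5p8 (R : realType) (E m : nat) (hE : (1 <= E)%N) (hm : (1 <= m)%N)
  (b b' : (1 + E + m).-tuple bool) (hbb' : b != b')
  (hnot0 : ~ (fp_gamma R b = XReal 0 /\ fp_gamma R b' = XReal 0))
  (hnotNaN : ~ (fp_gamma R b = XNaN /\ fp_gamma R b' = XNaN)) :
  (dict_lt (fp_phi_inv b) (fp_phi_inv b') <-> fp_lt b b') /\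
  (fp_lt b b' <-> xlt (fp_gamma R b) (fp_gamma R b')).
Proof.
split; first exact: iff_refl.
case: (phi_surj b) => c Hc; subst b.
case: (phi_surj b') => c' Hc; subst b'.
have hcc : bin_val c != bin_val c'.
  apply: contra hbb' => /eqP /tuple_bv_inj ->; exact: eqxx.
rewrite /fp_lt !phi_inv_phi dict_lt_tuple.
rewrite !gamma_Gv // in hnot0 hnotNaN *.
rewrite !bin_val_phi in hnot0 hnotNaN *.
have eN : (1 + E + m = (E + m).+1)%N by rewrite -addnA add1n.
have hM : (1 <= 2 ^ m)%N by rewrite expn_gt0.
have h2E : (2 <= 2 ^ E)%N by rewrite -{1}(expn1 2) leq_exp2l.
have hP : (2 * 2 ^ m <= 2 ^ (E + m))%N by rewrite expnD leq_mul2r h2E orbT.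
have hQ : ((2 ^ E - 1) * 2 ^ m = 2 ^ (E + m) - 2 ^ m)%N by rewrite mulnBl mul1n expnD.
have hQ1 : (1 <= (2 ^ E - 1) * 2 ^ m)%N by rewrite hQ; lia.
have e2 : (2 ^ (1 + E + m) = 2 * 2 ^ (E + m))%N by rewrite eN expnS.
have hc : (bin_val c < 2 * 2 ^ (E + m))%N.
  by have := bin_val_lt c; rewrite size_tuple e2.
have hc' : (bin_val c' < 2 * 2 ^ (E + m))%N.
  by have := bin_val_lt c'; rewrite size_tuple e2.
rewrite /Vf -/(VfA _ _ _) in hnot0 hnotNaN *.
rewrite !Gv_VfA // in hnot0 hnotNaN *.
have hcst := cst_gt0 R E m.
split => [h|h].
  exact: Gn_mono.
case: (ltngtP (bin_val c) (bin_val c')) => // hlt; last by move: hcc; rewrite hlt eqxx.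
exfalso; apply: (xlt_asym h); apply: Gn_mono => //.
- by case=> ??; apply: hnot0.
- by case=> ??; apply: hnotNaN.
Qed.
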